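(* Let $G=(S,R,\rho)$ be a $q$-linear grammar and $D$ its $q$-derivative. Then for all $n\ge1$ and $f,g\in\mathbb{E}$, \[ D^n(fg)=\sum_{k=0}^n{n\brack k}_q\,D^k(f)\,\uparrow^k\!\big(D^{n-k}(g)\big). \]
   Context: $\mathbb{K}$ is a commutative ring with unity and characteristic zero, $q$ an indeterminate. For a set $S$ of master variables, $\mathbb{S}=\{s_i:s\in S,\ i\ge0\}$ is a set of non-commuting variables, $F(\mathbb{S})$ the free group on $\mathbb{S}$, $\mathbb{E}=\mathbb{K}[q][F(\mathbb{S})]$ its group algebra. A rule $R$ assigns to each $s_i$ an element $R(s_i)\in\mathbb{E}$, extended by $R(s_i^{-1})=-s_i^{-1}R(s_i)s_{i+1}^{-1}$. The up-arrow $\uparrow:\mathbb{E}\to\mathbb{E}$ is the $\mathbb{K}[q]$-linear map replacing each letter $s_i^{\pm1}$ of a word by $s_{i+1}^{\pm1}$, and $\uparrow^k$ is its $k$-th iterate. An order is a map rewriting each word by permuting its letters (extended linearly); KSO is the identity. A $q$-grammar is a triple $(S,R,\rho)$ with $\rho$ an order; its $q$-derivative is the $\mathbb{K}[q]$-linear map with $D(w_1\cdots w_n)=\sum_{j=1}^n\rho\big(w_1\cdots w_{j-1}R(w_j)\uparrow(w_{j+1}\cdots w_n)\big)$ for letters $w_j\in\mathbb{S}\cup\mathbb{S}^{-1}$, $D^0=\mathrm{id}$, $D^k=D\circ D^{k-1}$. A $q$-grammar is $q$-linear if $\rho=\mathrm{KSO}$ and $R(s_{i+1})=q\uparrow R(s_i)$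 for every $s_i\in\mathbb{S}$. ${n\brack k}_q=\frac{(q;q)_n}{(q;q)_k(q;q)_{n-k}}$, $(q;q)_n=\prod_{i=1}^n(1-q^i)$. *)

(* Defs.v *)
From mathcomp Require Import all_boot all_algebra.
Set Implicit Arguments. Unset Strict Implicit. Unset Printing Implicit Defensive.
Import GRing.Theory.
Local Open Scope ring_scope.

Definition char_zero (K : comNzRingType) : Prop :=
  forall n : nat, (0 < n)%N -> (n%:R : K) != 0.

Section QGrammar.
Variables (K : comNzRingType) (S : eqType).

(* A letter s_i^{+-1}: ((s, i), b) with b = true meaning the inverse s_i^{-1}. *)
Definition letter := (S * nat * bool)%type.
Definition letter_inv (x : letter) : letter := (x.1, ~~ x.2).

(* Words in the letters; a free-group element is a reduced word. *)
Definition word := seq letter.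

Definition reduce (w : word) : word :=
  foldr (fun x acc => if acc is y :: t then
                        (if y == letter_inv x then t else x :: acc)
                      else [:: x]) [::] w.

(* Elements of E = K[q][F(S)] are represented by formal finite K[q]-linear
   combinations of words; two representatives denote the same element of E
   iff they have the same coefficient on every reduced word. *)
Definition E := seq ({poly K} * word).

Definition coefE (f : E) (w : word) : {poly K} :=
  \sum_(p <- f | reduce p.2 == w) p.1.

Definition E_eq (f g : E) : Prop := forall w : word, coefE f w = coefE g w.

Definition wordE (w : word) : E := [:: (1, w)].
Definition addE (f g : E) : E := f ++ g.
Definition oppE (f : E) : E := [seq (- p.1, p.2) | p <- f].
Definition scaleE (c : {poly K}) (f : E) : E := [seq (c * p.1, p.2) | p <- f].
Definition mulE (f g : E) : E := [seq (p.1 * r.1, p.2 ++ r.2) | p <- f, r <- g].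
Definition sumE (fs : seq E) : E := flatten fs.

Definition upl (x : letter) : letter := (x.1.1, x.1.2.+1, x.2).
Definition upw (w : word) : word := map upl w.
Definition upE (f : E) : E := [seq (p.1, upw p.2) | p <- f].
Definition upEn (k : nat) (f : E) : E := iter k upE f.

Definition rule := S -> nat -> E.

Definition ruleL (R : rule) (x : letter) : E :=
  let: (s, i, b) := x in
  if b then oppE (mulE (mulE (wordE [:: (s, i, true)]) (R s i))
                       (wordE [:: (s, i.+1, true)]))
  else R s i.

Definition word_order := word -> word.
Definition KSO : word_order := fun w => w.

Definition orderE (rho : word_order) (f : E) : E := [seq (p.1, rho (reduce p.2)) | p <- f].

Definition Dword (R : rule) (rho : word_order) (w : word) : E :=
  sumE [seq (match drop j w with
             | x :: post => orderE rho
                  (mulE (mulE (wordE (take j w)) (ruleL R x)) (wordE (upw post)))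
             | [::] => [::]
             end) | j <- iota 0 (size w)].

Definition qderiv (R : rule) (rho : word_order) (f : E) : E :=
  sumE [seq scaleE p.1 (Dword R rho (reduce p.2)) | p <- f].

Definition qderivn (R : rule) (rho : word_order) (n : nat) (f : E) : E :=
  iter n (qderiv R rho) f.

Definition q_linear (R : rule) (rho : word_order) : Prop :=
  (forall w, rho w = KSO w) /\
  (forall s i, E_eq (R s i.+1) (scaleE 'X (upE (R s i)))).

End QGrammar.

Definition qpoch (K : comNzRingType) (n : nat) : {poly K} :=
  \prod_(i < n) (1 - 'X^(i.+1)).

Fixpoint qbinom (K : comNzRingType) (n k : nat) : {poly K} :=
  match n, k with
  | _, 0 => 1
  | 0, _.+1 => 0
  | n'.+1, k'.+1 => qbinom K n' k' + 'X^(k'.+1) * qbinom K n' k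
  end.

(* Main.v *)
Require Import Defs.
From mathcomp Require Import all_boot all_algebra.
Set Implicit Arguments. Unset Strict Implicit. Unset Printing Implicit Defensive.
Import GRing.Theory.
Local Open Scope ring_scope.


Section Red.
Variable S : eqType.
Implicit Types (x y : letter S) (u v w t : word S).

Definition step x (acc : word S) : word S :=
  if acc is y :: t then (if y == letter_inv x then t else x :: acc) else [:: x].

Lemma reduceE w : reduce w = foldr step [::] w.
Proof. by []. Qed.

Lemma invK : involutive (@letter_inv S).
Proof. by case=> a b; rewrite /letter_inv /= negbK. Qed.

Fixpoint reduced w : bool :=
  match w with
  | x :: ((y :: _) as t) => (y != letter_inv x) && reduced t
  | _ => true
  end.

Lemma reduced_tail x t : reduced (x :: t) -> reduced t.
Proof. by case: t => //= y t /andP[]. Qed.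

Lemma reduced_step x v : reduced v -> reduced (step x v).
Proof.
case: v => [|y t] //= Hr.
case: ifP => [_|/negbT H] /=; first exact: reduced_tail Hr.
by rewrite H Hr.
Qed.

Lemma reduced_foldr r u : reduced r -> reduced (foldr step r u).
Proof. by move=> Hr; elim: u => //= x u IH; apply: reduced_step. Qed.

Lemma reduced_reduce w : reduced (reduce w).
Proof. by rewrite reduceE; apply: reduced_foldr. Qed.

Lemma reduce_id w : reduced w -> reduce w = w.
Proof.
elim: w => // x t IH Hr.
rewrite reduceE /= -reduceE IH; last exact: reduced_tail Hr.
case: t Hr {IH} => //= y t /andP[Hy _].
by rewrite (negbTE Hy).
Qed.

Lemma reduce_reduce w : reduce (reduce w) = reduce w.
Proof. exact/reduce_id/reduced_reduce. Qed.

Lemma step_cancel x v : reduced v -> step x (step (letter_inv x) v) = v.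
Proof.
case: v => [|y t] /=; first by rewrite eqxx.
rewrite invK; case: eqP => [->|_] Hr /=; last by rewrite eqxx.
case: t Hr => //= z t /andP[Hz _].
by rewrite (negbTE Hz).
Qed.

Lemma step_foldr r x v : reduced r -> reduced v ->
  step x (foldr step r v) = foldr step r (step x v).
Proof.
move=> Hr; case: v => [|y t] //= Hv.
case: eqP => [->|] //= .
by rewrite step_cancel //; apply: reduced_foldr.
Qed.

Lemma foldr_reduce r u : reduced r -> foldr step r u = foldr step r (reduce u).
Proof.
move=> Hr; elim: u => // x u IH.
rewrite /= IH step_foldr //; last exact: reduced_reduce.
Qed.

Lemma reduce_cat u v : reduce (u ++ v) = foldr step (reduce v) u.
Proof. by rewrite reduceE foldr_cat. Qed.

Lemma reduce_catL u v : reduce (reduce u ++ v) = reduce (u ++ v).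
Proof. by rewrite !reduce_cat -foldr_reduce //; apply: reduced_reduce. Qed.

Lemma reduce_catR u v : reduce (u ++ reduce v) = reduce (u ++ v).
Proof. by rewrite !reduce_cat reduce_reduce. Qed.

Lemma reduce_mid (a m b : word S) : reduce (a ++ reduce m ++ b) = reduce (a ++ m ++ b).
Proof. by rewrite -reduce_catR reduce_catL reduce_catR. Qed.

Lemma reduce_cons x w : reduce (x :: w) = step x (reduce w).
Proof. by []. Qed.

Lemma reduce_consR x w : reduce (x :: reduce w) = reduce (x :: w).
Proof. by rewrite !reduce_cons reduce_reduce. Qed.

Lemma reduce_cancel x w : reduce (x :: letter_inv x :: w) = reduce w.
Proof. by rewrite !reduce_cons step_cancel //; apply: reduced_reduce. Qed.

Lemma reduce_cancel' x w : reduce (letter_inv x :: x :: w) = reduce w.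
Proof. by rewrite -{2}(invK x) reduce_cancel. Qed.

Lemma upl_inj : injective (@upl S).
Proof. by case=> [[a i] b] [[a' i'] b'] [-> -> ->]. Qed.

Lemma upl_inv x : letter_inv (upl x) = upl (letter_inv x).
Proof. by case: x => [[a i] b]. Qed.

Lemma reduce_upw w : reduce (upw w) = upw (reduce w).
Proof.
elim: w => // x w IH.
rewrite /upw /= -/(upw w) IH.
case: (reduce w) => [|y t] //=.
by rewrite upl_inv (inj_eq upl_inj); case: ifP.
Qed.

End Red.


Section Ev.
Variables (K : comNzRingType) (S : eqType).
Notation P := {poly K}.
Notation EE := (E K S).
Implicit Types (f g h : EE) (c : word S -> P).

Definition ev c f : P := \sum_(p <- f) p.1 * c (reduce p.2).

Lemma ev_ext c1 c2 f : (forall w, c1 w = c2 w) -> ev c1 f = ev c2 f.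
Proof. by move=> H; apply: eq_bigr => p _; rewrite H. Qed.

Lemma ev_nil c : ev c [::] = 0.
Proof. by rewrite /ev big_nil. Qed.

Lemma ev_cat c f g : ev c (f ++ g) = ev c f + ev c g.
Proof. by rewrite /ev big_cat. Qed.

Lemma ev_sumE c fs : ev c (sumE fs) = \sum_(f <- fs) ev c f.
Proof.
elim: fs => [|f fs IH]; first by rewrite big_nil ev_nil.
by rewrite big_cons /sumE /= ev_cat -IH.
Qed.

Lemma ev_scale c a f : ev c (scaleE a f) = a * ev c f.
Proof.
rewrite /ev /scaleE big_map mulr_sumr; apply: eq_bigr => p _ /=.
by rewrite mulrA.
Qed.

Lemma ev_opp c f : ev c (oppE f) = - ev c f.
Proof.
rewrite /ev /oppE big_map -sumrN; apply: eq_bigr => p _ /=.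
by rewrite mulNr.
Qed.

Lemma ev_word c w : ev c (wordE K w) = c (reduce w).
Proof. by rewrite /ev big_cons big_nil /= mul1r addr0. Qed.

Lemma ev_up c f : ev c (upE f) = ev (fun w => c (upw w)) f.
Proof.
rewrite /ev /upE big_map; apply: eq_bigr => p _ /=.
by rewrite reduce_upw.
Qed.

Lemma ev_reduce c f : ev (fun w => c (reduce w)) f = ev c f.
Proof. by apply: eq_bigr => p _; rewrite reduce_reduce. Qed.

Lemma ev_mul c f g :
  ev c (mulE f g) = ev (fun u => ev (fun v => c (reduce (u ++ v))) g) f.
Proof.
rewrite /ev /mulE big_allpairs_dep; apply: eq_bigr => p _ /=.
rewrite mulr_sumr; apply: eq_bigr => r _ /=.
by rewrite mulrA reduce_catL reduce_catR.
Qed.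

Lemma ev_fubini (F : word S -> word S -> P) f g :
  ev (fun u => ev (fun v => F u v) g) f = ev (fun v => ev (fun u => F u v) f) g.
Proof.
rewrite /ev; under eq_bigr do rewrite mulr_sumr.
rewrite exchange_big /=; apply: eq_bigr => r _.
rewrite mulr_sumr; apply: eq_bigr => p _.
by rewrite mulrCA.
Qed.

Lemma ev_scalef c a f : ev (fun w => a * c w) f = a * ev c f.
Proof.
rewrite /ev mulr_sumr; apply: eq_bigr => p _; by rewrite mulrCA.
Qed.

Lemma ev_addf c1 c2 f : ev (fun w => c1 w + c2 w) f = ev c1 f + ev c2 f.
Proof.
rewrite /ev -big_split; apply: eq_bigr => p _; by rewrite mulrDr.
Qed.

Definition feq f g := forall c, ev c f = ev c g.

Lemma feq_E_eq f g : feq f g -> E_eq f g.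
Proof.
move=> H w; have := H (fun v => (v == w)%:R).
rewrite /ev /Defs.coefE big_mkcond [in X in _ = X -> _]big_mkcond /= => E1.
rewrite big_mkcond [in RHS]big_mkcond /=.
rewrite (eq_bigr (fun p : P * word S => p.1 * (reduce p.2 == w)%:R)); last first.
  by move=> p _; case: eqP; rewrite ?mulr1 ?mulr0.
rewrite E1; apply: eq_bigr => p _.
by case: eqP; rewrite ?mulr1 ?mulr0.
Qed.

Lemma ev_partition c f (U : seq (word S)) : uniq U ->
  (forall p, p \in f -> reduce p.2 \in U) ->
  ev c f = \sum_(w <- U) Defs.coefE f w * c w.
Proof.
move=> HU Hf.
rewrite (eq_bigr (fun w => \sum_(p <- f) (if reduce p.2 == w then p.1 * c (reduce p.2) else 0))); last first.
  move=> w _; rewrite /Defs.coefE big_mkcond mulr_suml; apply: eq_bigr => p _.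
  by case: eqP => [->|]; rewrite ?mul0r.
rewrite exchange_big /ev big_seq_cond [RHS]big_seq_cond; apply: eq_bigr => p /andP[Hp _].
rewrite -big_mkcond /= big_const_seq.
have -> : count (fun w => reduce p.2 == w) U = 1%N.
  have := count_uniq_mem (reduce p.2) HU; rewrite (Hf p Hp) /= => <-.
  by apply: eq_count => w /=; rewrite eq_sym.
by rewrite /= addr0.
Qed.

Lemma E_eq_feq f g : E_eq f g -> feq f g.
Proof.
move=> H c.
pose U := undup [seq reduce p.2 | p <- f ++ g].
have HU : uniq U by apply: undup_uniq.
rewrite (@ev_partition c f U) // ?(@ev_partition c g U) //.
  by apply: eq_bigr => w _; rewrite H.
- move=> p Hp; rewrite mem_undup; apply/mapP; exists p => //.
  by rewrite mem_cat Hp orbT.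
- move=> p Hp; rewrite mem_undup; apply/mapP; exists p => //.
  by rewrite mem_cat Hp.
Qed.

End Ev.


Section Der.
Variables (K : comNzRingType) (S : eqType) (R : rule K S) (rho : word_order S).
Hypothesis hrho : forall w, rho w = w.
Notation P := {poly K}.
Notation EE := (E K S).
Implicit Types (f g h : EE) (c : word S -> P).

Lemma ev_order c f : ev c (orderE rho f) = ev c f.
Proof.
rewrite /ev /orderE big_map; apply: eq_bigr => p _ /=.
by rewrite hrho reduce_reduce.
Qed.

Lemma ev_term0 c a r b :
  ev c (mulE (mulE (wordE K a) r) (wordE K b)) = ev (fun y => c (reduce (a ++ y ++ b))) r.
Proof.
rewrite ev_mul (ev_ext _ (fun u => ev_word _ _)) ev_mul ev_word.
apply: ev_ext => v.
by rewrite reduce_catL reduce_catR -catA reduce_catL.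
Qed.

Lemma ev_term c a r b :
  ev c (orderE rho (mulE (mulE (wordE K a) r) (wordE K b))) =
  ev (fun y => c (reduce (a ++ y ++ b))) r.
Proof. by rewrite ev_order ev_term0. Qed.

Definition d c w := ev c (Dword R rho w).

Lemma d_nil c : d c [::] = 0.
Proof. by rewrite /d /Dword /= /sumE /= ev_nil. Qed.

Lemma d_cons c x w :
  d c (x :: w) = ev (fun y => c (reduce (y ++ upw w))) (ruleL R x)
               + d (fun y => c (reduce (x :: y))) w.
Proof.
rewrite /d /Dword /=.
rewrite -[iota 1 _]/(iota (1 + 0) _) iotaDl -map_comp.
rewrite /sumE /= ev_cat ev_term -!/(sumE _) !ev_sumE !big_map.
congr (_ + _); apply: eq_bigr => j _ /=.
rewrite add0n.
case: (drop j w) => [|y post]; first by rewrite !ev_nil.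
rewrite !ev_term; apply: ev_ext => v.
by rewrite reduce_reduce cat_cons reduce_cons.
Qed.


Arguments reduce : simpl never.
Arguments upw : simpl never.

Lemma upw_cons (x : letter S) (w : word S) : upw (x :: w) = upl x :: upw w.
Proof. by []. Qed.
Lemma upw_cat (u v : word S) : upw (u ++ v) = upw u ++ upw v.
Proof. exact: map_cat. Qed.
Lemma upw_nil : @upw S [::] = [::].
Proof. by []. Qed.
Lemma Dword_nil : Dword R rho [::] = [::].
Proof. by []. Qed.

Lemma d_cat c u v :
  d c (u ++ v) = d (fun y => c (reduce (y ++ upw v))) u + d (fun y => c (reduce (u ++ y))) v.
Proof.
elim: u c => [|x u IH] c.
  by rewrite /d Dword_nil ev_nil add0r /= ev_reduce.
rewrite cat_cons d_cons IH d_cons addrA; congr (_ + _ + _); apply: ev_ext => y.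
- by rewrite reduce_catL upw_cat catA.
- by rewrite reduce_consR reduce_catL.
- by rewrite reduce_consR.
Qed.

Lemma reduce_cancel_mid (A : word S) z W :
  reduce (A ++ z :: letter_inv z :: W) = reduce (A ++ W).
Proof. by rewrite !reduce_cat reduce_cancel. Qed.

Lemma cancel_rule c x t :
  ev (fun y => c (reduce (y ++ upw (letter_inv x :: t)))) (ruleL R x) +
  ev (fun y => c (reduce (x :: reduce (y ++ upw t)))) (ruleL R (letter_inv x)) = 0.
Proof.
case: x => [[s i] [|]] /=.
- rewrite ev_opp ev_term0 addrC; apply/eqP; rewrite subr_eq0; apply/eqP.
  apply: ev_ext => y.
  rewrite reduce_consR reduce_catL upw_cons -catA cat_cons cat0s -catA /=.
  have := reduce_cancel_mid ((s, i, true) :: y) (s, i.+1, true) (upw t).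
  by rewrite /letter_inv /= => ->.
- rewrite ev_opp ev_term0; apply/eqP; rewrite subr_eq0; apply/eqP.
  apply: ev_ext => y.
  rewrite reduce_consR -[_ :: reduce _ ++ _]cat1s reduce_mid upw_cons -!catA /=.
  have := reduce_cancel (s, i, false) (y ++ [:: (s, i.+1, true)] ++ upw t).
  by rewrite /letter_inv /= => ->.
Qed.

Lemma d_reduce c w : d c (reduce w) = d c w.
Proof.
elim: w c => [|x w IH] c; first by [].
rewrite [RHS]d_cons -IH.
have -> : ev (fun y => c (reduce (y ++ upw w))) (ruleL R x) +
          d (fun y => c (reduce (x :: y))) (reduce w) = d c (x :: reduce w).
  rewrite d_cons; congr (_ + _); apply: ev_ext => y.
  by rewrite -reduce_upw reduce_catR.
rewrite reduce_cons; have := reduced_reduce w; move: (reduce w) => v Hv.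
case: v Hv => [|y t] Hv; first by [].
rewrite /step; case: eqP => [->|_] //.
rewrite d_cons d_cons /= addrA cancel_rule add0r.
rewrite /d -ev_reduce; apply: ev_ext => z.
by rewrite reduce_consR reduce_cancel.
Qed.

Hypothesis hR : forall s i (h : word S -> P), ev h (R s i.+1) = 'X * ev (fun y => h (upw y)) (R s i).

Lemma rule_up (h : word S -> P) x : ev h (ruleL R (upl x)) = 'X * ev (fun y => h (upw y)) (ruleL R x).
Proof.
case: x => [[s i] [|]] /=; last exact: hR.
rewrite !ev_opp !ev_term0 hR mulrN; congr (- (_ * _)); apply: ev_ext => y.
by rewrite -reduce_upw !upw_cat.
Qed.

Lemma d_up c w : d c (upw w) = 'X * d (fun y => c (upw y)) w.
Proof.
elim: w c => [|x w IH] c; first by rewrite upw_nil !d_nil mulr0.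
rewrite upw_cons !d_cons IH rule_up mulrDr; congr (_ * _ + _ * _); apply: ev_ext => y.
- by rewrite -reduce_upw upw_cat.
- by rewrite -reduce_upw upw_cons.
Qed.

Notation D := (qderiv R rho).

Lemma ev_qderiv c f : ev c (D f) = ev (fun w => d c w) f.
Proof.
rewrite /qderiv ev_sumE big_map; apply: eq_bigr => p _.
by rewrite ev_scale.
Qed.

Lemma D_mul c f g :
  ev c (D (mulE f g)) = ev c (mulE (D f) (upE g)) + ev c (mulE f (D g)).
Proof.
rewrite ev_qderiv ev_mul !ev_mul !ev_qderiv -ev_addf; apply: ev_ext => u.
have -> : d (fun u0 => ev (fun v => c (reduce (u0 ++ v))) (upE g)) u =
          ev (fun v => d (fun y => c (reduce (y ++ upw v))) u) g.
  by rewrite /d (ev_ext _ (fun u0 => ev_up _ _)) ev_fubini.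
rewrite ev_qderiv -ev_addf; apply: ev_ext => v.
by rewrite d_reduce d_cat.
Qed.

Lemma D_up c h : ev c (D (upE h)) = 'X * ev (fun w => c (upw w)) (D h).
Proof.
rewrite ev_qderiv ev_up ev_qderiv -ev_scalef; apply: ev_ext => w.
exact: d_up.
Qed.

Lemma D_upn k c h : ev c (D (upEn k h)) = 'X^k * ev c (upEn k (D h)).
Proof.
elim: k c => [|k IH] c; first by rewrite expr0 mul1r.
rewrite [upEn k.+1 _]/= D_up IH -/(upEn k _) [upEn k.+1 _]/= ev_up exprS mulrA.
by [].
Qed.

End Der.


Lemma qbinom_n0 (K : comNzRingType) n : qbinom K n 0 = 1.
Proof. by case: n. Qed.

Lemma qbinomSS (K : comNzRingType) n k :
  qbinom K n.+1 k.+1 = qbinom K n k + 'X^(k.+1) * qbinom K n k.+1.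
Proof. by []. Qed.

Lemma qbinom0S (K : comNzRingType) k : qbinom K 0 k.+1 = 0.
Proof. by []. Qed.

Lemma qbinom_gt (K : comNzRingType) n k : (n < k)%N -> qbinom K n k = 0.
Proof.
elim: n k => [|n IH] [|k] H; rewrite ?qbinom0S //.
by rewrite qbinomSS !IH ?mulr0 ?addr0 // ltnW.
Qed.

Lemma sum_iota (K : comNzRingType) (F : nat -> {poly K}) m :
  \sum_(k <- iota 0 m) F k = \sum_(0 <= k < m) F k.
Proof. by rewrite /index_iota subn0. Qed.
Lemma qpascal_sum (K : comNzRingType) (T : nat -> nat -> {poly K}) n :
  \sum_(k <- iota 0 n.+1) qbinom K n k * (T k.+1 (n - k)%N + 'X^k * T k (n - k).+1) =
  \sum_(k <- iota 0 n.+2) qbinom K n.+1 k * T k (n.+1 - k)%N.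
Proof.
rewrite sum_iota [in RHS]sum_iota.
under eq_bigr do rewrite mulrDr.
rewrite big_split.
rewrite [in RHS]big_nat_recl // qbinom_n0 mul1r subn0.
rewrite [X in _ + X = _]big_nat_recl // qbinom_n0 expr0 mul1r subn0.
under [in RHS]eq_bigr do rewrite qbinomSS mulrDl subSS.
rewrite big_split.
rewrite [X in _ = _ + (_ + X)]big_nat_recr // qbinom_gt // mulr0 mul0r /=.
rewrite mul1r addr0 addrCA; congr (_ + (_ + _)).
apply: eq_big_nat => k /andP[_ Hk].
rewrite -subSn // subSS mulrA [qbinom K n k.+1 * _]mulrC.
by [].
Qed.

Section Main.
Variables (K : comNzRingType) (S : eqType) (R : rule K S) (rho : word_order S).
Hypothesis hrho : forall w, rho w = w.
Hypothesis hR : forall s i (h : word S -> {poly K}),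
  ev h (R s i.+1) = 'X * ev (fun y => h (upw y)) (R s i).
Variables (f g : E K S).

Lemma mul_Dup c (A G : E K S) k :
  ev c (mulE A (qderiv R rho (upEn k G))) = 'X^k * ev c (mulE A (upEn k (qderiv R rho G))).
Proof.
rewrite !ev_mul -ev_scalef; apply: ev_ext => u.
exact: (D_upn hrho hR).
Qed.

Lemma main_ev n c :
  ev c (qderivn R rho n (mulE f g)) =
  \sum_(k <- iota 0 n.+1) qbinom K n k *
     ev c (mulE (qderivn R rho k f) (upEn k (qderivn R rho (n - k) g))).
Proof.
elim: n c => [|n IH] c.
  by rewrite big_cons big_nil qbinom_n0 mul1r addr0.
have -> : qderivn R rho n.+1 (mulE f g) = qderiv R rho (qderivn R rho n (mulE f g)) by [].
rewrite (ev_qderiv R rho) IH.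
pose T k m := ev c (mulE (qderivn R rho k f) (upEn k (qderivn R rho m g))).
apply: (etrans _ (qpascal_sum T n)).
apply: eq_bigr => k _; congr (_ * _).
rewrite -(ev_qderiv R rho) (D_mul R hrho) mul_Dup.
by [].
Qed.

End Main.

Theorem proposition4p7 (K : comNzRingType) (S : eqType)
    (R : rule K S) (rho : word_order S) (n : nat) (f g : E K S) :
  char_zero K -> q_linear R rho -> (0 < n)%N ->
  E_eq (qderivn R rho n (mulE f g))
      (sumE [seq scaleE (qbinom K n k)
                   (mulE (qderivn R rho k f)
                         (upEn k (qderivn R rho (n - k)%N g)))
            | k <- iota 0 n.+1]).
Proof.
move=> _ [hrho hRE] _.
have hrho' : forall w, rho w = w by move=> w; rewrite hrho.
have hR : forall s i (h : word S -> {poly K}),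
    ev h (R s i.+1) = 'X * ev (fun y => h (upw y)) (R s i).
  by move=> s i h; rewrite (E_eq_feq (hRE s i)) ev_scale ev_up.
apply: feq_E_eq => c.
rewrite (main_ev hrho' hR) ev_sumE big_map; apply: eq_bigr => k _.
by rewrite ev_scale.
Qed.
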